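(* For every seller $j\in[m]$, the probability that the mechanism $\mathbb{M}_{\text{add}}$ makes seller $j$ an offer (for her bundle $S_j$ at payment $p(S_j)$) that she accepts is exactly $1/2$.
   Context: Two-sided market: buyers $[n]$, sellers $[m]$, items $[k]$; seller $j$ owns $I_j$ ($I_j$ disjoint, covering $[k]$). Buyer valuations $v_i$ are monotone normalized XOS functions on $2^{[k]}$ drawn independently from public distributions $G_i$; seller $j$'s valuation $w_j$ is additive over subsets of $I_j$, drawn independently from a public distribution $F_j$. For XOS $v$ and $T\subseteq[k]$, $a(v,T,\cdot)$ is a fixed additive function with $a(v,T,T)=v(T)$, $a(v,T,S)\le v(S)$. $\mathbb{A}$ maps each buyer profile $\mathbf v$ to an allocation $X^{\mathbb A}(\mathbf v)$ of disjoint bundles to buyers. $\mathrm{SW}^B_\ell(\mathbf v)=a(v_i,X^{\mathbb A}_i(\mathbf v),\{\ell\})$ if $\ell\in X^{\mathbb A}_i(\mathbf v)$, else $0$; $\mathrm{SW}^S_\ell(\mathbf w)=w_j(\{\ell\})$ for $\ell\in I_j$. $L_j=\{\ell\in I_j:\mathbb{E}[\mathrm{SW}^B_\ell]\ge4\mathbb{E}[\mathrm{SW}^S_\ell]\}$, $L=\bigcup_jL_j$, $p_\ell=\frac12\mathbb{E}[\mathrm{SW}^B_\ell(\mathbf v)]$ for $\ell\in L$. Mechanism $\mathbb{M}_{\text{add}}$: $\Lambda_1=L$; buyers $i=1,\dots,n$ in turn request a bundle $B_i\subseteq\Lambda_i$ maximizing their expected utility at prices $p_\ell$, and $\Lambda_{i+1}=\Lambda_i\setminus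 B_i$. Let $B=\bigcup_iB_i$. For each seller $j$: $S_j=B\cap L_j$, $p(S_j)=\sum_{\ell\in S_j}p_\ell$, $q_j=1/(2\Pr[w_j(S_j)\le p(S_j)])$; with probability $q_j$ the mechanism offers $j$ payment $p(S_j)$ for $S_j$, and she accepts iff $w_j(S_j)\le p(S_j)$; on acceptance items of $S_j$ go to their requesting buyers at prices $p_\ell$. *)

(* Defs.v *)
From HB Require Import structures.
From mathcomp Require Import all_boot all_order all_algebra.
From mathcomp Require Import all_classical all_reals all_analysis.

Set Implicit Arguments.
Unset Strict Implicit.
Unset Printing Implicit Defensive.

Import Order.TTheory GRing.Theory Num.Theory.

Local Open Scope ring_scope.

Section Valuations.
Context (R : realType) (k : nat).
Local Notation item := 'I_k.

Definition valuation := {set item} -> R.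

Definition monotone_val (v : valuation) : Prop :=
  forall S T : {set item}, S \subset T -> v S <= v T.

Definition normalized_val (v : valuation) : Prop := v finset.set0 = 0.

Definition additive_fun (f : item -> R) : valuation :=
  fun S => \sum_(l in S) f l.

Definition XOS_val (v : valuation) : Prop :=
  exists (N : nat) (cl : 'I_N -> item -> R),
    (forall c l, 0 <= cl c l) /\
    (forall S, v S = \big[Num.max/0]_(c < N) additive_fun (cl c) S).

Definition supporting_clauses (a : valuation -> {set item} -> item -> R)
  : Prop :=
  forall v, XOS_val v -> forall T : {set item},
    (forall l, 0 <= a v T l) /\
    additive_fun (a v T) T = v T /\
    (forall S, additive_fun (a v T) S <= v S).

End Valuations.

Section Market.
Context (R : realType) (n m k : nat).
Local Notation item := 'I_k.
Local Notation profile := ('I_n -> valuation R k).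

Context (XA : profile -> 'I_n -> {set item})
        (a : valuation R k -> {set item} -> item -> R).

(* SW^B_l(v) = a(v_i, X_i(v), {l}) if l \in X_i(v), 0 otherwise
   (bundles are disjoint, so at most one summand is nonzero) *)
Definition SWB (prof : profile) (l : item) : R :=
  \sum_(i < n) (if l \in XA prof i then a (prof i) (XA prof i) l else 0).

Context {db : measure_display} {Tb : measurableType db}
        (G : probability Tb R) (vv : Tb -> profile).
Context {dw : measure_display} {Tw : measurableType dw}
        (F : 'I_m -> probability Tw R) (wv : Tw -> item -> R)
        (owner : item -> 'I_m).

Definition ESWB (l : item) : \bar R := (\int[G]_t (SWB (vv t) l)%:E)%E.
Definition ESWS (l : item) : \bar R := (\int[F (owner l)]_s (wv s l)%:E)%E.

Definition Lset : {set item} := [set l | (4%:E * ESWS l <= ESWB l)%E].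

Definition price (l : item) : R := fine (ESWB l) / 2.

Definition psum (S : {set item}) : R := \sum_(l in S) price l.

(* buyers' request rule: req i v_i Lambda is the bundle buyer i (with
   valuation v_i) requests when Lambda is still available *)
Context (req : 'I_n -> valuation R k -> {set item} -> {set item}).

(* Lambda_{i+1} (0-indexed: lam t i is the set available to buyer i) *)
Fixpoint lam (t : Tb) (i : nat) : {set item} :=
  match i with
  | 0 => Lset
  | i'.+1 =>
      let Lam := lam t i' in
      Lam :\: oapp (fun ii : 'I_n => req ii (vv t ii) Lam) finset.set0 (insub i')
  end.

Definition Breq (t : Tb) (i : 'I_n) : {set item} := req i (vv t i) (lam t i).

Definition Bset (t : Tb) : {set item} := \bigcup_(i < n) Breq t i.

Definition Sj (j : 'I_m) (t : Tb) : {set item} :=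
  [set l in Bset t | (owner l == j) && (l \in Lset)].

Definition wS (s : Tw) (S : {set item}) : R := additive_fun (wv s) S.

Definition accept_prob (j : 'I_m) (S : {set item}) : \bar R :=
  F j [set s | wS s S <= psum S]%classic.

Definition qj (j : 'I_m) (S : {set item}) : R :=
  (2 * fine (accept_prob j S))^-1.

(* Outcome space for the event concerning seller j:
   ((buyer profile, seller valuation), coin u ~ Unif[0,1]).
   The offer is made iff u < q_j (probability q_j), and seller j accepts
   iff w_j(S_j) <= p(S_j). *)
Definition offer_accepted_event (j : 'I_m) : set ((Tb * Tw) * R) :=
  [set x | x.2 < qj j (Sj j x.1.1) /\
           wS x.1.2 (Sj j x.1.1) <= psum (Sj j x.1.1)]%classic.

End Market.

(* Main.v *)
Require Import Defs.
From HB Require Import structures.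
From mathcomp Require Import all_boot all_order all_algebra.
From mathcomp Require Import all_classical all_reals all_analysis.
From mathcomp Require Import ring lra measurable_realfun.

Import Order.TTheory GRing.Theory Num.Theory.
Local Open Scope ring_scope.

Section Mfin.
Local Open Scope classical_set_scope.
Context {d : measure_display} {T : measurableType d}.

Definition mfin {U : finType} (f : T -> U) :=
  forall u, measurable [set t | f t = u].

Lemma mfin_cst (U : finType) (u0 : U) : mfin (fun _ => u0).
Proof.
move=> u; have [->|ne] := eqVneq u0 u.
  by rewrite (_ : [set t | u = u] = setT) //; apply/seteqP; split.
rewrite (_ : [set t | u0 = u] = set0) //; apply/seteqP; split=> t //=.
by move=> e; move: ne; rewrite e eqxx.
Qed.

Lemma mfin_comp (U V : finType) (f : T -> U) (g : U -> V) :
  mfin f -> mfin (fun t => g (f t)).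
Proof.
move=> mf v.
rewrite (_ : [set t | g (f t) = v] =
  \bigcup_(u in [set u | g u = v]) [set t | f t = u]).
  by apply: fin_bigcup_measurable => //; exact: finite_finset.
apply/seteqP; split=> t /=.
  by move=> <-; exists (f t).
by move=> [u /= <- ->].
Qed.

Lemma mfin_pair (U V : finType) (f : T -> U) (g : T -> V) :
  mfin f -> mfin g -> mfin (fun t => (f t, g t)).
Proof.
move=> mf mg [u v].
rewrite (_ : [set t | (f t, g t) = (u, v)] =
  [set t | f t = u] `&` [set t | g t = v]).
  exact: measurableI.
apply/seteqP; split=> t /=; first by case=> -> ->.
by case=> -> ->.
Qed.

Lemma mfin_ffun (I U : finType) (f : I -> T -> U) :
  (forall i, mfin (f i)) -> mfin (fun t => [ffun i => f i t]).
Proof.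
move=> mf g.
rewrite (_ : [set t | [ffun i => f i t] = g] =
  ~` \bigcup_(i in [set: I]) ~` [set t | f i t = g i]).
  apply: measurableC; apply: fin_bigcup_measurable.
    exact: finite_finset.
  by move=> i _; apply: measurableC; apply: (mf i).
apply/seteqP; split=> t /=.
  by move=> <- [i _ /=]; rewrite ffunE.
move=> H; apply/ffunP => i; rewrite ffunE.
apply: contrapT => ne; apply: H; by exists i.
Qed.

End Mfin.
Arguments mfin_comp {d T U V f} g.
Arguments mfin_pair {d T U V f g}.
Arguments mfin_ffun {d T I U f}.


Lemma mfin_ext {d} {T : measurableType d} (U : finType) (f g : T -> U) :
  (forall t, f t = g t) -> mfin f -> mfin g.
Proof. by move=> e; rewrite (_ : f = g) //; apply/funext. Qed.

Arguments mfin_ext {d T U f g}.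

Section Main.
Context (R : realType) (n m k : nat)
  (XA : ('I_n -> valuation R k) -> 'I_n -> {set 'I_k})
  (a : valuation R k -> {set 'I_k} -> 'I_k -> R)
  (db : measure_display) (Tb : measurableType db)
  (G : probability Tb R) (vv : Tb -> 'I_n -> valuation R k)
  (dw : measure_display) (Tw : measurableType dw)
  (F : 'I_m -> probability Tw R) (wv : Tw -> 'I_k -> R)
  (owner : 'I_k -> 'I_m)
  (req : 'I_n -> valuation R k -> {set 'I_k} -> {set 'I_k}).

Hypothesis hreq : forall i Lam S, measurable [set t | req i (vv t i) Lam = S]%classic.

Lemma mfin_req (i : 'I_n) : mfin (fun t => [ffun L => req i (vv t i) L]).
Proof. by apply: mfin_ffun => L S; apply: hreq. Qed.

Lemma mfin_lam i : mfin (fun t => lam XA a G vv F wv owner req t i).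
Proof.
elim: i => [|i IH] /=; first exact: mfin_cst.
case: insubP => [ii _ _|_] /=.
  have := mfin_comp (fun p : {set 'I_k} * {ffun {set 'I_k} -> {set 'I_k}} => p.1 :\: p.2 p.1)
    (mfin_pair IH (mfin_req ii)).
  by move=> h; apply: (mfin_ext _ h) => t /=; rewrite ffunE.
have := mfin_comp (fun L : {set 'I_k} => L :\: finset.set0) IH.
by move=> h; apply: (mfin_ext _ h).
Qed.

Lemma mfin_Breq i : mfin (fun t => Breq XA a G vv F wv owner req t i).
Proof.
have := mfin_comp (fun p : {set 'I_k} * {ffun {set 'I_k} -> {set 'I_k}} => p.2 p.1)
    (mfin_pair (mfin_lam i) (mfin_req i)).
by move=> h; apply: (mfin_ext _ h) => t /=; rewrite ffunE.
Qed.

Lemma mfin_Sj j : mfin (fun t => Sj XA a G vv F wv owner req j t).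
Proof.
have := mfin_comp (fun f : {ffun 'I_n -> {set 'I_k}} =>
     [set l in \bigcup_(i < n) f i | (owner l == j) && (l \in Lset XA a G vv F wv owner)])
   (mfin_ffun (fun i => mfin_Breq i)).
move=> h; apply: (mfin_ext _ h) => t /=.
rewrite /Sj /Bset; apply/setP => l; rewrite !inE.
congr andb; congr (l \in _); by under eq_bigr => i _ do rewrite ffunE.
Qed.

End Main.
Arguments mfin_Sj {R n m k XA a db Tb G vv dw Tw F wv owner req}.

Lemma uniform_lt (R : realType) (q : R) : 0 < q -> q <= 1 ->
  uniform_prob (@ltr01 R) [set u | u < q]%classic = q%:E.
Proof.
move=> q0 q1.
rewrite /uniform_prob integral_uniform_pdf.
rewrite (_ : ([set u | u < q] `&` `[0, 1])%classic = `[0, q[%classic); last first.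
  apply/seteqP; split=> x /=; rewrite !in_itv /=.
    by case=> xq /andP[-> _].
  move=> /andP[x0 xq]; split => //; rewrite x0 /=; exact: (le_trans (ltW xq) q1).
rewrite (eq_integral (fun=> 1%:E)); last first.
  move=> x; rewrite inE /= in_itv /= => /andP[x0 xq].
  by rewrite /uniform_pdf x0 (le_trans (ltW xq) q1) subr0 invr1.
rewrite integral_cst //= mul1e lebesgue_measure_itv /= lte_fin q0 /= -EFinD; by rewrite oppr0 addr0.
Qed.

Section Markov.
Context (R : realType) (n m k : nat)
  (XA : ('I_n -> valuation R k) -> 'I_n -> {set 'I_k})
  (a : valuation R k -> {set 'I_k} -> 'I_k -> R)
  (db : measure_display) (Tb : measurableType db)
  (G : probability Tb R) (vv : Tb -> 'I_n -> valuation R k)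
  (dw : measure_display) (Tw : measurableType dw)
  (F : 'I_m -> probability Tw R) (wv : Tw -> 'I_k -> R)
  (owner : 'I_k -> 'I_m).

Hypothesis hw0 : forall s l, 0 <= wv s l.
Hypothesis hwm : forall l, measurable_fun [set: Tw] (fun s => wv s l).
Hypothesis hB : forall l, G.-integrable [set: Tb] (fun t => (SWB XA a (vv t) l)%:E).
Hypothesis hWi : forall l, (F (owner l)).-integrable [set: Tw] (fun s => (wv s l)%:E).
Hypothesis hSWB0 : forall t l, 0 <= SWB XA a (vv t) l.

Lemma price_ge0 l : 0 <= price XA a G vv l.
Proof.
rewrite /price divr_ge0 // fine_ge0 // /ESWB.
by apply: integral_ge0 => t _; rewrite lee_fin.
Qed.

Lemma ESWS_le l : l \in Lset XA a G vv F wv owner ->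
  (ESWS F wv owner l <= (price XA a G vv l / 2)%:E)%E.
Proof.
rewrite finset.in_set => H.
have fB : ESWB XA a G vv l \is a fin_num by exact: (integrable_fin_num measurableT (hB l)).
have fS : ESWS F wv owner l \is a fin_num by exact: (integrable_fin_num measurableT (hWi l)).
move: H; rewrite /price -(fineK fB) -(fineK fS) -EFinM !lee_fin => H.
lra.
Qed.

Lemma measurable_wS (S : {set 'I_k}) : measurable_fun [set: Tw] (fun s => wS wv s S).
Proof.
rewrite (_ : (fun s => wS wv s S) = (fun s => \sum_(l <- [seq l <- index_enum 'I_k | l \in S]) wv s l)).
  by apply: measurable_sum => l; apply: hwm.
by apply/funext => s; rewrite /wS /additive_fun big_filter.
Qed.

Lemma wS_ge0 s S : 0 <= wS wv s S.
Proof. by rewrite /wS /additive_fun; apply: sumr_ge0 => l _. Qed.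

Lemma expect_wS j (S : {set 'I_k}) :
  (forall l, l \in S -> owner l = j /\ l \in Lset XA a G vv F wv owner) ->
  (\int[F j]_s (wS wv s S)%:E <= (psum XA a G vv S / 2)%:E)%E.
Proof.
move=> HS.
under eq_integral => s _ do
  rewrite /wS /additive_fun -sumEFin big_mkcond /=.
rewrite ge0_integral_sum //; last 2 first.
- move=> l; case: (l \in S) => //.
  by apply/measurable_EFinP; apply: hwm.
- by move=> l s _; case: (l \in S) => //; rewrite lee_fin.
rewrite /psum mulr_suml -sumEFin [X in (_ <= X)%E]big_mkcond /=.
apply: lee_sum => l _.
case: ifPn => lS; last by rewrite integral0.
have [ol lL] := HS l lS.
have := ESWS_le l lL; rewrite /ESWS ol; exact.
Qed.

Lemma accept_half j (S : {set 'I_k}) :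
  (forall l, l \in S -> owner l = j /\ l \in Lset XA a G vv F wv owner) ->
  ((2^-1)%:E <= F j [set s | (wS wv s S <= psum XA a G vv S)%R]%classic)%E.
Proof.
move=> HS.
set p := psum XA a G vv S.
have p0 : 0 <= p by rewrite /p /psum; apply: sumr_ge0 => l _; apply: price_ge0.
have mw := measurable_wS S.
have Ew := expect_wS j S HS.
set Bc := [set s | p < wS wv s S]%classic.
have mBc : measurable Bc.
  have := mw measurableT _ (measurable_itv `]p, +oo[); rewrite setTI.
  congr measurable; apply/seteqP; split => s /=; rewrite in_itv /= andbT //.
have -> : [set s | wS wv s S <= p]%classic = (~` Bc)%classic.
  apply/seteqP; split => s /=; rewrite /Bc /= ltNge.
    by move=> ->.
  by move=> H; apply/negPn/negP.
rewrite probability_setC //.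
have [r rE] : exists r, F j Bc = r%:E.
  exists (fine (F j Bc)); rewrite fineK // ge0_fin_numE //.
  by apply: (le_lt_trans (probability_le1 _ mBc)); rewrite ltry.
rewrite rE -EFinB lee_fin.
suff : r <= 2^-1 by lra.
have mg : measurable_fun [set: Tw] (fun s => (wS wv s S)%:E).
  exact/measurable_EFinP.
have Iabs : (\int[F j]_(s in [set: Tw]) `|(wS wv s S)%:E| =
             \int[F j]_s (wS wv s S)%:E)%E.
  by apply: eq_integral => s _; rewrite gee0_abs // lee_fin wS_ge0.
have [pz|pp] := eqVneq p 0.
  have I0 : (\int[F j]_(s in [set: Tw]) `|(wS wv s S)%:E| = 0)%E.
    rewrite Iabs; apply/eqP; rewrite eq_le; apply/andP; split.
      by apply: (le_trans Ew); rewrite -/p pz mul0r.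
    by apply: integral_ge0 => s _; rewrite lee_fin wS_ge0.
  have [N [mN N0 sub]] := (ae_eq_integral_abs (F j) measurableT mg).1 I0.
  have : (F j Bc <= F j N)%E.
    apply: le_measure; rewrite ?inE //.
    move=> s; rewrite /Bc /= pz => ws; apply: sub => /= H.
    by move: (H I) => [] ew; move: ws; rewrite ew ltxx.
  rewrite rE N0 lee_fin => r0; apply: (le_trans r0); rewrite invr_ge0; lra.
have pgt : 0 < p by rewrite lt0r pp p0.
have H := le_integral_abse (F j) measurableT mg pgt.
have : (F j ([set: Tw] `&` [set x | (p%:E <= `|(wS wv x S)%:E|)%E])%classic >= F j Bc)%E.
  apply: le_measure; rewrite ?inE //.
    apply: emeasurable_fun_c_infty => //; exact: measurableT_comp.
  move=> s; rewrite /Bc /= => ws; split => //.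
  by rewrite lee_fin ger0_norm ?wS_ge0 // ltW.
rewrite rE => H2.
have H3 : ((p * r)%:E <= (p / 2)%:E)%E.
  have H4 : (0 <= p%:E)%E by rewrite lee_fin ltW.
  have H5 := lee_wpmul2l H4 H2.
  rewrite EFinM; apply: (le_trans H5); apply: (le_trans H).
  by rewrite Iabs.
rewrite lee_fin in H3.
nra.
Qed.


Lemma measurable_B (S : {set 'I_k}) (c : R) :
  measurable [set s | (wS wv s S <= c)%R]%classic.
Proof.
have := measurable_wS S measurableT _ (measurable_itv `]-oo, c]); rewrite setTI.
by congr measurable; apply/seteqP; split => s /=; rewrite in_itv /=.
Qed.
End Markov.
Arguments accept_half {R n m k XA a db Tb G vv dw Tw F wv owner}.
Arguments measurable_B {R k dw Tw wv}.

Theorem proposition5 (R : realType) (n m k : nat)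
  (XA : ('I_n -> valuation R k) -> 'I_n -> {set 'I_k})
  (a : valuation R k -> {set 'I_k} -> 'I_k -> R)
  (db : measure_display) (Tb : measurableType db)
  (G : probability Tb R) (vv : Tb -> 'I_n -> valuation R k)
  (dw : measure_display) (Tw : measurableType dw)
  (F : 'I_m -> probability Tw R) (wv : Tw -> 'I_k -> R)
  (owner : 'I_k -> 'I_m)
  (req : 'I_n -> valuation R k -> {set 'I_k} -> {set 'I_k}) :
  (forall t i, monotone_val (vv t i) /\ normalized_val (vv t i) /\
               XOS_val (vv t i)) ->
  supporting_clauses a ->
  (forall prof (i i' : 'I_n), i != i' -> [disjoint XA prof i & XA prof i']) ->
  (forall s l, 0 <= wv s l) ->
  (forall l, measurable_fun [set: Tw] (fun s => wv s l)) ->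
  (forall l, G.-integrable [set: Tb]
               (fun t => (SWB XA a (vv t) l)%:E)) ->
  (forall l, (F (owner l)).-integrable [set: Tw] (fun s => (wv s l)%:E)) ->
  (forall i v Lam, req i v Lam \subset Lam) ->
  (forall i Lam S, measurable [set t | req i (vv t i) Lam = S]%classic) ->
  forall j : 'I_m,
    (((G \x F j) \x uniform_prob (@ltr01 R))
       (offer_accepted_event XA a G vv F wv owner req j) = (2^-1 : R)%:E)%E.
Proof.
move=> hvv ha hdisj hw0 hwm hB hWi hsub hreq j.
have hSWB0 : forall t l, 0 <= SWB XA a (vv t) l.
  move=> t l; rewrite /SWB; apply: sumr_ge0 => i _; case: ifP => // _.
  have [_ [_ hx]] := hvv t i.
  by have [h0 _] := ha _ hx (XA (vv t) i); apply: h0.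
set Sj' := Sj XA a G vv F wv owner req j.
pose A S := [set t | Sj' t = S]%classic.
pose B S := [set s | (wS wv s S <= psum XA a G vv S)%R]%classic.
pose C S := [set u : R | (u < qj XA a G vv F wv j S)%R]%classic.
pose E S := ((A S `*` B S) `*` C S)%classic.
have mA S : measurable (A S) by apply: (mfin_Sj hreq j S).
have mB S : measurable (B S) by apply: (measurable_B hwm).
have mC S : measurable (C S).
  rewrite (_ : C S = `]-oo, qj XA a G vv F wv j S[%classic); first exact: measurable_itv.
  by apply/seteqP; split => u /=; rewrite in_itv.
have Eeq : offer_accepted_event XA a G vv F wv owner req j =
           (\bigcup_(S in [set: {set 'I_k}]) E S)%classic.
  apply/seteqP; split.
    move=> [[t s] u] /= [h1 h2]; exists (Sj' t) => //.
  by move=> [[t s] u] [S _ [[/= At Bs] Cu]]; rewrite /A /= in At; rewrite -At in Bs Cu.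
rewrite Eeq measure_fin_bigcup //; last 3 first.
- exact: finite_finset.
- move=> S S' _ _ [[[t s] u] [[[At _] _] [[At' _] _]]].
  by rewrite /A /= in At At'; rewrite -At -At'.
- by move=> S _; exact: (measurableX (measurableX (mA S) (mB S)) (mC S)).
transitivity (\sum_(S \in [set: {set 'I_k}]) (G (A S) * (2^-1 : R)%:E))%E.
  apply: eq_fsbigr => S _.
  transitivity (G (A S) * F j (B S) * uniform_prob (@ltr01 R) (C S))%E.
    transitivity ((G \x F j) (A S `*` B S) * uniform_prob (@ltr01 R) (C S))%E.
      have := @product_measure1E _ _ _ _ R (G \x F j)%E (uniform_prob (@ltr01 R)) (A S `*` B S)%classic (C S) (measurableX (mA S) (mB S)) (mC S); move=> h; exact h.
    have := @product_measure1E _ _ _ _ R G (F j) (A S) (B S) (mA S) (mB S); move=> h; rewrite h //.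
  rewrite -muleA.
  have [[t At]|nA] := pselect (exists t, A S t); last first.
    rewrite (_ : A S = set0%classic) ?measure0 ?mul0e //.
    by apply/seteqP; split => t // At; apply: nA; exists t.
  have HS : forall l, l \in S -> owner l = j /\ l \in Lset XA a G vv F wv owner.
    move=> l; rewrite -At /Sj' /Sj !finset.inE => /andP[_ /andP[/eqP -> ->]] //.
  have h := accept_half hw0 hwm hB hWi hSWB0 j S HS.
  have [P PE] : exists P, F j (B S) = P%:E.
    exists (fine (F j (B S))); rewrite fineK // ge0_fin_numE //.
    by apply: (le_lt_trans (probability_le1 _ (mB S))); rewrite ltry.
  have P1 : P <= 1 by rewrite -lee_fin -PE; apply: probability_le1.
  have P2 : 2^-1 <= P by rewrite -lee_fin -PE.
  have acc : accept_prob XA a G vv F wv j S = P%:E by exact: PE.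
  have qE : qj XA a G vv F wv j S = (2 * P)^-1 by rewrite /qj acc.
  rewrite PE /C qE uniform_lt; last 2 first.
  - rewrite invr_gt0; lra.
  - rewrite invf_le1; lra.
  have e : P * (2 * P)^-1 = 2^-1.
    have P0 : 0 < P by lra.
    by rewrite invfM mulrCA mulfV ?mulr1 // lt0r_neq0.
  by rewrite -EFinM e.
rewrite -ge0_mule_fsuml; last by move=> S; apply: measure_ge0.
rewrite -measure_fin_bigcup.
- rewrite (_ : (\bigcup_(S in [set: {set 'I_k}]) A S)%classic = setT%classic).
    rewrite [X in (X * _)%E](_ : _ = 1%:E) ?mul1e //; exact: probability_setT.
  by apply/seteqP; split => t // _; exists (Sj' t).
- exact: finite_finset.
- by move=> S S' _ _ [t [At At']]; rewrite /A /= in At At'; rewrite -At -At'.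
- by move=> S _; apply: mA.
Qed.
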